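(* Let $p,w,v$ be positive integers with $1\le v\le w$, let $\mathbf{A}$ be a $p\times p$ matrix and $\mathbf{B}$ a $w\times p$ matrix over $\mathbb{F}_2$, and let $\mathbf{x}_0\in\mathbb{F}_2^p$ be a nonzero initial state. Define $\mathbf{x}_i=\mathbf{A}\mathbf{x}_{i-1}$ and $\mathbf{y}_i=\mathbf{B}\mathbf{x}_i={}^t(y_{i,0},\dots,y_{i,w-1})$ for $i\ge 0$. Assume the characteristic polynomial $P(z)=\det(\mathbf{I}z-\mathbf{A})$ is irreducible over $\mathbb{F}_2$ (e.g. primitive), and that $h_0(z)\neq 0$ (notation as in the context). Let $k\ge 1$ and $w_{j,l-1}\in\mathbb{F}_2$ for $0\le j\le k-1$, $1\le l\le v$, and put $w_{l-1}(z):=\sum_{j=0}^{k-1}w_{j,l-1}z^j\in\mathbb{F}_2[z]$. Then $$\sum_{l=1}^{v}\sum_{j=0}^{k-1} w_{j,l-1}\,y_{i+j,l-1}=0\quad\text{for all } i\ge 0$$ holds if and only if ${}^t(w_0(z),\dots,w_{v-1}(z))\in\mathcal{L}_v^*$.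
   Context: For $1\le l\le w$ define the formal power series $G_{l-1}(z):=\sum_{i=0}^\infty y_{i,l-1}z^{-i-1}\in\mathbb{F}_2((z^{-1}))$. Each has the rational form $G_{l-1}(z)=h_{l-1}(z)/P(z)$ with $h_{l-1}(z)\in\mathbb{F}_2[z]$, $\deg h_{l-1}<\deg P$. Assuming $P$ irreducible and $h_0\neq 0$, let $h_0^{-1}(z)$ denote a polynomial inverse of $h_0(z)$ modulo $P(z)$ and set $\bar h_{l-1}(z):=h_0^{-1}(z)h_{l-1}(z)\bmod P(z)$ for $2\le l\le v$. The Couture–L'Ecuyer dual lattice is the $\mathbb{F}_2[z]$-submodule $\mathcal{L}_v^*\subset\mathbb{F}_2[z]^v$ spanned over $\mathbb{F}_2[z]$ by $\mathbf{w}_1(z)={}^t(P(z),0,\dots,0)$ and $\mathbf{w}_{l}(z)={}^t(-\bar h_{l-1}(z),0,\dots,0,1,0,\dots,0)$ for $2\le l\le v$, where the entry $1$ is in coordinate $l$ (signs are irrelevant over $\mathbb{F}_2$). *)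

(* Defs.v *)
From HB Require Import structures.
From mathcomp Require Import all_boot all_order all_algebra.
Set Implicit Arguments. Unset Strict Implicit. Unset Printing Implicit Defensive.
Import GRing.Theory.
Local Open Scope ring_scope.

Definition yout (F : fieldType) (p w : nat) (A : 'M[F]_p) (B : 'M[F]_(w, p))
  (x0 : 'cV[F]_p) (i : nat) (l : 'I_w) : F :=
  (B *m (A ^+ i *m x0)) l 0.

(* The formal Laurent series G(z) = sum_{i>=0} y_i z^{-i-1} has the rational
   form h(z)/P(z) with deg h < deg P, i.e. P(z) G(z) = h(z) in F((z^{-1})),
   compared coefficientwise:
   - coefficient of z^{-n-1} (n >= 0) of P*G is sum_k P_k y_{k+n}, must be 0;
   - coefficient of z^m (m >= 0) of P*G is sum_{k>m} P_k y_{k-m-1}, must be h_m. *)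
Definition rational_form (F : fieldType) (y : nat -> F) (h P : {poly F}) : Prop :=
  [/\ (size h < size P)%N,
      (forall n : nat, \sum_(k < size P) P`_k * y (k + n)%N = 0) &
      (forall m : nat, \sum_(k < size P | (m < k)%N) P`_k * y (k - m - 1)%N = h`_m)].

(* Generators of the Couture--L'Ecuyer dual lattice L_v^* (0-based coordinates):
   generator 0 is (P, 0, ..., 0); generator l >= 1 is
   (-hbar l, 0, ..., 1 (at coordinate l), ..., 0). *)
Definition dual_gen (F : fieldType) (v : nat) (P : {poly F}) (hbar : 'I_v -> {poly F})
  (l j : 'I_v) : {poly F} :=
  if (val l == 0)%N then (if (val j == 0)%N then P else 0)
  else if (val j == 0)%N then - hbar l
  else if j == l then 1 else 0.

Definition in_dual_lattice (F : fieldType) (v : nat) (P : {poly F})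
  (hbar : 'I_v -> {poly F}) (W : 'I_v -> {poly F}) : Prop :=
  exists c : 'I_v -> {poly F},
    forall j : 'I_v, W j = \sum_(l < v) c l * dual_gen P hbar l j.

(* Main.v *)
From HB Require Import structures.
Require Import Defs.
From HB Require Import structures.
From mathcomp Require Import all_boot all_order all_algebra zify ring.
Set Implicit Arguments. Unset Strict Implicit. Unset Printing Implicit Defensive.
Import GRing.Theory.
Local Open Scope ring_scope.

Section Seq.
Variable F : fieldType.
Variable P : {poly F}.

Definition recP (y : nat -> F) := forall n : nat, \sum_(k < size P) P`_k * y (k + n)%N = 0.
Definition numc (y : nat -> F) (m : nat) :=
  \sum_(k < size P | (m < k)%N) P`_k * y (k - m - 1)%N.
Definition num (y : nat -> F) : {poly F} := \poly_(m < (size P).-1) numc y m.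

Lemma numc_nat y m : numc y m = \sum_(m.+1 <= k < size P) P`_k * y (k - m.+1)%N.
Proof.
rewrite /numc big_geq_mkord /=; apply: eq_bigr => k _; by rewrite -subnDA addn1.
Qed.

Lemma coef_num y m : (num y)`_m = numc y m.
Proof.
rewrite coef_poly; case: ifP => // hm.
rewrite numc_nat big_geq //.
case: (size P) hm => //= n; by rewrite ltnS => /negbT; rewrite -leqNgt.
Qed.

Lemma dvdp_sum (I : Type) (r : seq I) (Q : pred I) (f : I -> {poly F}) (d : {poly F}) :
  (forall i, Q i -> d %| f i) -> d %| \sum_(i <- r | Q i) f i.
Proof.
move=> H; apply: (big_ind (fun x => d %| x)); [exact: dvdp0 | exact: dvdp_add | exact: H].
Qed.


Lemma num_shift y : (0 < size P)%N -> recP y ->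
  num (fun i => y i.+1) = 'X * num y - y 0%N *: P.
Proof.
move=> hP hr; apply/polyP => m.
rewrite coefB coefXM coefZ !coef_num !numc_nat.
case: m => [|m] /=.
  have := hr 0%N; rewrite -(big_mkord xpredT (fun k => P`_k * y (k + 0)%N)) big_ltn //.
  move=> /eqP; rewrite addrC addr_eq0 => /eqP H.
  rewrite sub0r mulrC -[y 0%N]/(y (0 + 0)%N) -H.
  apply: eq_big_nat => k /andP[hk _]; congr (_ * y _); lia.
case: (ltnP m.+1 (size P)) => hm.
  rewrite (big_ltn hm) subnn [P`_m.+1 * _]mulrC [y 0%N * _ + _]addrC addrK.
  apply: eq_big_nat => k /andP[hk _]; congr (_ * y _); lia.
rewrite !big_geq // ?(leq_trans hm) // nth_default // mulr0 subr0 //.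
Qed.


Lemma recP_shiftn y j : recP y -> recP (fun i => y (i + j)%N).
Proof.
move=> hr n; transitivity (\sum_(k < size P) P`_k * y (k + (n + j))%N); last exact: hr.
by apply: eq_bigr => k _; rewrite addnA.
Qed.

Lemma num_ext y1 y2 : (forall i, y1 i = y2 i) -> num y1 = num y2.
Proof.
move=> H; apply/polyP => m; rewrite !coef_num /numc; apply: eq_bigr => k _; by rewrite H.
Qed.

Lemma num_shiftn y j : (0 < size P)%N -> recP y ->
  P %| num (fun i => y (i + j)%N) - 'X^j * num y.
Proof.
move=> hP hr; elim: j => [|j IH].
  rewrite expr0 mul1r (@num_ext _ y) ?subrr ?dvdp0 // => i; by rewrite addn0.
have -> := @num_ext (fun i => y (i + j.+1)%N) (fun i => (fun i => y (i + j)%N) i.+1).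
  rewrite (num_shift hP (recP_shiftn j hr)).
have -> : 'X * num (fun i => y (i + j)%N) - y (0 + j)%N *: P - 'X^(j.+1) * num y =
  'X * (num (fun i => y (i + j)%N) - 'X^j * num y) - (y (0 + j)%N)%:P * P.
  by rewrite mul_polyC exprS mulrBr mulrA addrAC.
  apply: dvdp_sub; [exact: dvdp_mull | exact: dvdp_mull (dvdpp _)].
by move=> i; rewrite addnS addSn.
Qed.

Lemma num_inj y : P \is monic -> recP y -> (forall m, numc y m = 0) -> forall i, y i = 0.
Proof.
move=> hm hr hn.
have hP : (0 < size P)%N by rewrite size_poly_gt0 monic_neq0.
set d := (size P).-1.
have hsz : size P = d.+1 by rewrite /d prednK.
have hlead : P`_d = 1 by move/monicP: hm; rewrite lead_coefE.
elim/ltn_ind => i IH.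
case: (ltnP i d) => hid.
  have := hn (d - i.+1)%N; rewrite numc_nat hsz big_nat_recr /=; last lia.
  rewrite big_nat_cond big1 ?add0r.
    by rewrite hlead mul1r; have -> : (d - (d - i.+1).+1 = i)%N by lia.
  move=> k /andP[/andP[h1 h2] _]; rewrite IH ?mulr0 //; lia.
have := hr (i - d)%N.
rewrite hsz big_ord_recr /= hlead mul1r big1 ?add0r.
  by have -> : (d + (i - d) = i)%N by lia.
move=> k _; rewrite IH ?mulr0 //; have := ltn_ord k; lia.
Qed.

End Seq.

Section Comb.
Variable F : fieldType.
Variable P : {poly F}.
Variables (v k : nat) (Y : 'I_v -> nat -> F) (wt : 'I_k -> 'I_v -> F).

Definition useq (i : nat) := \sum_(l < v) \sum_(j < k) wt j l * Y l (i + j)%N.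

Lemma recP_u : (forall l, recP P (Y l)) -> recP P useq.
Proof.
move=> hr n; rewrite /useq.
under eq_bigr do rewrite mulr_sumr.
rewrite exchange_big big1 // => l _.
under eq_bigr do rewrite mulr_sumr.
rewrite exchange_big big1 // => j _.
under eq_bigr do rewrite mulrCA.
rewrite -mulr_sumr.
have -> : \sum_(i < size P) P`_i * Y l (i + n + j)%N = 0.
  transitivity (\sum_(i < size P) P`_i * Y l (i + (n + j))%N); last exact: hr.
  by apply: eq_bigr => i _; rewrite addnA.
by rewrite mulr0.
Qed.

Lemma num_u : num P useq = \sum_(l < v) \sum_(j < k) wt j l *: num P (fun i => Y l (i + j)%N).
Proof.
apply/polyP => m; rewrite coef_num coef_sum /numc /useq.
under eq_bigr do rewrite mulr_sumr.
rewrite exchange_big; apply: eq_bigr => l _; rewrite coef_sum.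
under eq_bigr do rewrite mulr_sumr.
rewrite exchange_big; apply: eq_bigr => j _; rewrite coefZ coef_num /numc mulr_sumr.
by apply: eq_bigr => i _; rewrite mulrCA.
Qed.

Lemma num_u_cong : (0 < size P)%N -> (forall l, recP P (Y l)) ->
  P %| num P useq - \sum_(l < v) (\sum_(j < k) wt j l *: 'X^j) * num P (Y l).
Proof.
move=> hP hr; rewrite num_u -sumrB; apply: dvdp_sum => l _.
rewrite mulr_suml -sumrB; apply: dvdp_sum => j _.
rewrite -scalerAl -scalerBr -mul_polyC; apply: dvdp_mull; exact: num_shiftn.
Qed.

End Comb.

Section Latt.
Variable F : fieldType.
Variable P : {poly F}.
Variables (v : nat) (hb : 'I_v -> {poly F}).

Lemma gsum0 (c : 'I_v -> {poly F}) j : val j = 0%N ->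
  \sum_(l < v) c l * dual_gen P hb l j = c j * P - \sum_(l < v | l != j) c l * hb l.
Proof.
move=> hj; rewrite (bigD1 j) //= /dual_gen hj eqxx /=; congr (_ + _).
rewrite -sumrN; apply: eq_bigr => l hl.
have -> : (val l == 0%N) = false.
  by apply/negbTE; move: hl; rewrite -hj; apply: contra => /eqP/val_inj ->.
by rewrite mulrN.
Qed.

Lemma gsumS (c : 'I_v -> {poly F}) j : val j != 0%N ->
  \sum_(l < v) c l * dual_gen P hb l j = c j.
Proof.
move=> hj; rewrite (bigD1 j) //= /dual_gen (negbTE hj) eqxx mulr1 big1 ?addr0 //.
move=> l hl; case: ifP => _; first by rewrite ?(negbTE hj) mulr0.
by rewrite ?(negbTE hj) eq_sym (negbTE hl) mulr0.
Qed.

End Latt.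

Lemma latt_iff (F : fieldType) (P : {poly F}) (v : nat) (l0 : 'I_v) (hl0 : val l0 = 0%N)
  (H W : 'I_v -> {poly F}) (h0inv : {poly F}) (hinv : (h0inv * H l0) %% P = 1) :
  in_dual_lattice P (fun l => (h0inv * H l) %% P) W <-> P %| \sum_(l < v) W l * H l.
Proof.
set hb := fun l => (h0inv * H l) %% P.
have K1 : forall l, P %| h0inv * H l - hb l.
  move=> l; rewrite /hb {1}(divp_eq (h0inv * H l) P) addrK; exact: dvdp_mull (dvdpp _).
have K2 : P %| h0inv * H l0 - 1.
  by rewrite -hinv {1}(divp_eq (h0inv * H l0) P) addrK; exact: dvdp_mull (dvdpp _).
have K : forall l, P %| H l - hb l * H l0.
  move=> l; have -> : H l - hb l * H l0 =
     - (H l * (h0inv * H l0 - 1)) + H l0 * (h0inv * H l - hb l) by ring.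
  by apply: dvdp_add; rewrite ?dvdpNr; apply: dvdp_mull.
have nz : forall l, l != l0 -> val l != 0%N.
  by move=> l; rewrite -hl0; apply: contra => /eqP/val_inj ->.
split.
  case=> c hc; rewrite (bigD1 l0) //= hc gsum0 //.
  under eq_bigr => l hl do rewrite hc gsumS ?nz //.
  have -> : (c l0 * P - \sum_(l < v | l != l0) c l * hb l) * H l0 +
     \sum_(l < v | l != l0) c l * H l =
     c l0 * P * H l0 + \sum_(l < v | l != l0) c l * (H l - hb l * H l0).
    rewrite mulrBl mulr_suml -addrA; congr (_ + _).
    rewrite addrC -sumrB; apply: eq_bigr => l _; ring.
  apply: dvdp_add; first by rewrite mulrAC dvdp_mulIr.
  by apply: dvdp_sum => l _; apply: dvdp_mull.
move=> D.
set X := \sum_(l < v | l != l0) W l * hb l.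
have E1 : X = \sum_(l < v | l != l0) h0inv * (W l * H l) -
              \sum_(l < v | l != l0) W l * (h0inv * H l - hb l).
  rewrite -sumrB; apply: eq_bigr => l _; ring.
have E : W l0 + X = h0inv * (\sum_(l < v) W l * H l) -
   (W l0 * (h0inv * H l0 - 1) + \sum_(l < v | l != l0) W l * (h0inv * H l - hb l)).
  rewrite E1 [\sum_(l < v) W l * H l](bigD1 l0) //= mulrDr mulr_sumr; ring.
have DX : P %| W l0 + X.
  rewrite E; apply: dvdp_sub; first exact: dvdp_mull.
  apply: dvdp_add; first exact: dvdp_mull.
  by apply: dvdp_sum => l _; apply: dvdp_mull.
exists (fun l => if l == l0 then (W l0 + X) %/ P else W l) => j.
case: (eqVneq j l0) => [->|hj].
  rewrite gsum0 // eqxx divpK //.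
  rewrite (eq_bigr (fun l => W l * hb l)) ?addrK // => l hl; by rewrite (negbTE hl).
by rewrite gsumS ?nz // (negbTE hj).
Qed.

Lemma main_equiv (F : fieldType) (P : {poly F}) (v k : nat) (Y : 'I_v -> nat -> F)
  (wt : 'I_k -> 'I_v -> F) (H : 'I_v -> {poly F}) :
  P \is monic -> (forall l, recP P (Y l)) -> (forall l, H l = num P (Y l)) ->
  (forall i, useq Y wt i = 0) <->
  P %| \sum_(l < v) (\sum_(j < k) wt j l *: 'X^j) * H l.
Proof.
move=> hm hr hH.
have hP : (0 < size P)%N by rewrite size_poly_gt0 monic_neq0.
have C := num_u_cong wt hP hr.
rewrite (eq_bigr (fun l => (\sum_(j < k) wt j l *: 'X^j) * num P (Y l))); last first.
  by move=> l _; rewrite hH.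
split.
  move=> hu.
  have E0 : num P (useq Y wt) = 0.
    apply/polyP => m; rewrite coef_num coef0 /numc big1 // => i _; by rewrite hu mulr0.
  by move: C; rewrite E0 sub0r dvdpNr.
move=> D.
have Dn : P %| num P (useq Y wt).
  by rewrite -(subrK (\sum_(l < v) (\sum_(j < k) wt j l *: 'X^j) * num P (Y l))
      (num P (useq Y wt))); apply: dvdp_add.
have z : num P (useq Y wt) = 0.
  apply/eqP; apply/negPn/negP => nz.
  have := dvdp_leq nz Dn; have := size_poly (size P).-1 (numc P (useq Y wt)).
  rewrite /num; case: (size P) hP => //= n _ a b.
  by have := leq_trans b a; rewrite ltnn.
apply: (num_inj hm (recP_u wt hr)) => m.
by rewrite -coef_num z coef0.
Qed.

Theorem proposition1 (p w v : nat) (hp : (0 < p)%N) (hv1 : (1 <= v)%N) (hvw : (v <= w)%N)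
  (A : 'M['F_2]_p) (B : 'M['F_2]_(w, p)) (x0 : 'cV['F_2]_p) (hx0 : x0 != 0)
  (hirr : irreducible_poly (char_poly A))
  (h : 'I_w -> {poly 'F_2})
  (hrat : forall l : 'I_w, rational_form (fun i => yout A B x0 i l) (h l) (char_poly A))
  (i0 : 'I_w) (hi0 : val i0 = 0%N) (hh0 : h i0 != 0)
  (h0inv : {poly 'F_2}) (hinv : (h0inv * h i0) %% char_poly A = 1)
  (k : nat) (hk : (1 <= k)%N) (wt : 'I_k -> 'I_v -> 'F_2) :
  (forall i : nat,
     \sum_(l < v) \sum_(j < k) wt j l * yout A B x0 (i + j)%N (widen_ord hvw l) = 0)
  <->
  in_dual_lattice (char_poly A)
    (fun l : 'I_v => (h0inv * h (widen_ord hvw l)) %% char_poly A)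
    (fun l : 'I_v => \sum_(j < k) wt j l *: 'X^j).
Proof.
set l0 : 'I_v := Ordinal hv1.
have hl0 : widen_ord hvw l0 = i0 by apply: val_inj; rewrite /= hi0.
have HI : (h0inv * (fun l => h (widen_ord hvw l)) l0) %% char_poly A = 1 by rewrite /= hl0.
have L := @latt_iff _ (char_poly A) v l0 erefl (fun l => h (widen_ord hvw l))
  (fun l => \sum_(j < k) wt j l *: 'X^j) h0inv HI.
apply: (iff_trans _ (iff_sym L)).
apply: (main_equiv (Y := fun l i => yout A B x0 i (widen_ord hvw l))).
- exact: char_poly_monic.
- by move=> l n; case: (hrat (widen_ord hvw l)) => _ ->.
- move=> l; apply/polyP => m; rewrite coef_num.
  by case: (hrat (widen_ord hvw l)) => _ _ <-.
Qed.
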